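(* Let $\mathcal O$ be a $\delta$-subring of $R$ and $\alpha\in\mathfrak{gl}_n(\mathcal O)$. 1) Assume $\Delta$ is of type $SL_n$ and $u\in GL_n(R)$ satisfies $\delta u=\Delta^\alpha(u)$. Then for every $c\in G_{u/\mathcal O}$ we have $\delta(\det(c))=0$. 2) Assume $\Delta$ is of type $SO(q)$ and $u\in SO(q)$ satisfies $\delta u=\Delta^\alpha(u)$. Then for every $c\in G_{u/\mathcal O}$ we have $\delta(c^tqc)=0$ (entrywise).
   Context: Let $p$ be an odd prime, $R$ the unique complete discrete valuation ring with maximal ideal $pR$ and residue field an algebraic closure of $\mathbb F_p$; $\phi:R\to R$ the unique lift of Frobenius; $\delta a=(\phi(a)-a^p)/p$. For matrices, $\phi,\delta$ act entrywise and $u^{(p)}=(u_{ij}^p)$. Let $x$ be an $n\times n$ matrix of indeterminates, $A=R[x,\det(x)^{-1}]^\wedge$ ($p$-adic completion). For $\Delta\in\mathfrak{gl}_n(A)$, $\Phi(x)=x^{(p)}+p\Delta(x)$ and $\Delta^\alpha(x)=\alpha\Phi(x)+\Delta(x)$. Type $SL_n$: $p\nmid n$, $\Delta(x)=\frac{\lambda(x)-1}{p}x^{(p)}$, $\lambda(x)=(\det(x^{(p)})/\det(x)^p)^{-1/n}$ (binomial series $(1+pt)^a$, $a\in\mathbb Z_p$). Type $SO(q)$: $q$ is one of $\begin{pmatrix}0&1_r\\-1_r&0\end{pmatrix}$, $\begin{pmatrix}0&1_r\\1_r&0\end{pmatrix}$ ($n=2r$), $\begin{pmatrix}1&0&0\\0&0&1_r\\0&1_r&0\end{pmatrix}$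 ($n=2r+1$); $SO(q)$ is the identity component of $\{x^tqx=q\}$ in $SL_n$; $\Lambda(x)=(((x^{(p)})^tqx^{(p)})^{-1}(x^tqx)^{(p)})^{1/2}$ via the binomial series, and $\Delta(x)=x^{(p)}\frac{\Lambda(x)-1}{p}$. A $\delta$-subring is a subring $\mathcal O\subset R$ with $\delta\mathcal O\subset\mathcal O$. For $u$ as in the claim, $\mathcal O\{u\}$ is the subring of $R$ generated by $\mathcal O$ and the entries of $u,\delta u,\delta^2u,\dots$; $\tilde G_{u/\mathcal O}$ is the group of $\mathcal O$-algebra automorphisms $\sigma$ of $\mathcal O\{u\}$ with $\sigma\circ\delta=\delta\circ\sigma$ and $u^{-1}\sigma(u)\in GL_n(\mathcal O)$; the $\delta$-Galois group $G_{u/\mathcal O}\subset GL_n(\mathcal O)$ is the image of the injective homomorphism $\sigma\mapsto u^{-1}\sigma(u)$. *)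

(* Defs.v *)
From HB Require Import structures.
From mathcomp Require Import all_boot all_order all_algebra.
Set Implicit Arguments. Unset Strict Implicit. Unset Printing Implicit Defensive.
Import Order.TTheory GRing.Theory Num.Theory.
Local Open Scope ring_scope.

Section Defs.
Variable R : idomainType.
Variable p : nat.

Definition pdvd (m : nat) (x : R) : Prop := exists z : R, x = (p%:R ^+ m) * z.

Definition pconv (s : nat -> R) (y : R) : Prop :=
  forall m, exists N, forall k, (N <= k)%N -> pdvd m (y - s k).

(* R is a complete DVR with maximal ideal pR whose residue field is an
   algebraic closure of F_p (i.e. R = W(\bar F_p)); p-adic completeness is
   stated as convergence of p-adic Cauchy sequences. *)
Definition is_R_ring : Prop :=
  [/\ p%:R != 0 :> R,
      ~~ ((p%:R : R) \is a GRing.unit),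
      (forall x : R, x != 0 -> exists k (v : R), v \is a GRing.unit /\ x = p%:R ^+ k * v),
      (forall s : nat -> R,
          (forall m, exists N, forall k l, (N <= k)%N -> (N <= l)%N -> pdvd m (s k - s l)) ->
          exists y, pconv s y)
    & (* residue field algebraically closed *)
      (forall f : {poly R}, (1 < size f)%N -> lead_coef f \is a GRing.unit ->
          exists x, pdvd 1 f.[x]) /\
      (* residue field algebraic over F_p *)
      (forall x : R, exists k, (0 < k)%N /\ pdvd 1 (x ^+ (p ^ k) - x))].

Definition binq (a : rat) (k : nat) : rat :=
  (\prod_(i < k) (a - i%:R)) / (k`!)%:R.

(* y = w^a := sum_k binom(a,k) (w - 1)^k  (binomial series, p-adic limit) *)
Definition bin_pow_rel (a : rat) (w y : R) : Prop :=
  pconv (fun N => \sum_(k < N) ratr (binq a k) * (w - 1) ^+ k) y.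

Definition mxpow n (A : 'M[R]_n) (k : nat) : 'M[R]_n := iter k (mulmx A) 1%:M.

(* Y = M^a := sum_k binom(a,k) (M - 1)^k  (entrywise p-adic limit) *)
Definition bin_pow_mx_rel n (a : rat) (M Y : 'M[R]_n) : Prop :=
  forall m, exists N, forall k, (N <= k)%N -> forall i j,
    pdvd m ((Y - \sum_(l < k) ratr (binq a l) *: mxpow (M - 1%:M) l) i j).

Definition frob n (x : 'M[R]_n) : 'M[R]_n := map_mx (fun a => a ^+ p) x.

(* Dx = Delta(x) for Delta of type SL_n:
   Delta(x) = ((lambda(x) - 1)/p) x^{(p)},
   lambda(x) = (det(x^{(p)})/det(x)^p)^{-1/n} *)
Definition DeltaSL_rel n (x Dx : 'M[R]_n) : Prop :=
  exists (y d : R),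
    [/\ bin_pow_rel (- (n%:R)^-1) (\det (frob x) / (\det x ^+ p)) y,
        p%:R * d = y - 1
      & Dx = d *: frob x].

(* Dx = Delta(x) for Delta of type SO(q):
   Lambda(x) = (((x^{(p)})^t q x^{(p)})^{-1} (x^t q x)^{(p)})^{1/2},
   Delta(x) = x^{(p)} (Lambda(x) - 1)/p *)
Definition DeltaSO_rel n (q x Dx : 'M[R]_n) : Prop :=
  exists (Lam D : 'M[R]_n),
    [/\ bin_pow_mx_rel (2%:R^-1)
          (invmx ((frob x)^T *m q *m frob x) *m frob (x^T *m q *m x)) Lam,
        p%:R *: D = Lam - 1%:M
      & Dx = frob x *m D].

(* delta x = Delta^alpha(x) = alpha Phi(x) + Delta(x), Phi(x) = x^{(p)} + p Delta(x) *)
Definition delta_eq n (delta : R -> R) (alpha x Dx : 'M[R]_n) : Prop :=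
  map_mx delta x = alpha *m (frob x + p%:R *: Dx) + Dx.

Definition q_even n (r : nat) (s : R) : 'M[R]_n :=
  \matrix_(i < n, j < n)
    (if ((i : nat) < r)%N && ((j : nat) == (i + r)%N) then 1
     else if (r <= (i : nat))%N && ((i : nat) == (j + r)%N) then s else 0).

Definition q_odd n (r : nat) : 'M[R]_n :=
  \matrix_(i < n, j < n)
    (if ((i : nat) == 0%N) && ((j : nat) == 0%N) then 1
     else if (1 <= (i : nat) <= r)%N && ((j : nat) == (i + r)%N) then 1
     else if (r < (i : nat))%N && ((i : nat) == (j + r)%N) then 1 else 0).

Definition is_q n (q : 'M[R]_n) : Prop :=
  exists r, (0 < r)%N /\
    ((n = r.*2 /\ (q = q_even n r (-1) \/ q = q_even n r 1))
     \/ (n = r.*2.+1 /\ q = q_odd n r)).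

End Defs.

Section Galois.
Variable R : idomainType.

Definition is_delta_subring (delta : R -> R) (O : {pred R}) : Prop :=
  [/\ 1 \in O, (forall x y, x \in O -> y \in O -> x - y \in O),
      (forall x y, x \in O -> y \in O -> x * y \in O)
    & (forall x, x \in O -> delta x \in O)].

Inductive gen_ring (O : {pred R}) (S : R -> Prop) : R -> Prop :=
  | gr_O x : x \in O -> gen_ring O S x
  | gr_S x : S x -> gen_ring O S x
  | gr_add x y : gen_ring O S x -> gen_ring O S y -> gen_ring O S (x + y)
  | gr_opp x : gen_ring O S x -> gen_ring O S (- x)
  | gr_mul x y : gen_ring O S x -> gen_ring O S y -> gen_ring O S (x * y).

Definition Ogen (delta : R -> R) (O : {pred R}) n (u : 'M[R]_n) : R -> Prop :=
  gen_ring O (fun x => exists k i j, x = (iter k (map_mx delta) u) i j).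

Definition in_GLO (O : {pred R}) n (c : 'M[R]_n) : Prop :=
  [/\ forall i j, c i j \in O, c \in unitmx & forall i j, invmx c i j \in O].

Definition is_dGal_aut (delta : R -> R) (O : {pred R}) n (u : 'M[R]_n)
    (sigma : R -> R) : Prop :=
  let Ou := Ogen delta O u in
  (forall x, Ou x -> Ou (sigma x)) /\
  (forall y, Ou y -> exists x, Ou x /\ sigma x = y) /\
  (forall x y, Ou x -> Ou y -> sigma x = sigma y -> x = y) /\
  (forall x y, Ou x -> Ou y -> sigma (x + y) = sigma x + sigma y) /\
  (forall x y, Ou x -> Ou y -> sigma (x * y) = sigma x * sigma y) /\
  (forall a, a \in O -> sigma a = a) /\
  (forall x, Ou x -> delta (sigma x) = sigma (delta x)) /\
  in_GLO O (invmx u *m map_mx sigma u).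

Definition in_dGal (delta : R -> R) (O : {pred R}) n (u c : 'M[R]_n) : Prop :=
  exists sigma, is_dGal_aut delta O u sigma /\ c = invmx u *m map_mx sigma u.

End Galois.

(* Main.v *)
Require Import Defs.
From HB Require Import structures.
From mathcomp Require Import all_boot all_order all_algebra perm.
From mathcomp Require Import ring.
Import Order.TTheory GRing.Theory Num.Theory.
Local Open Scope ring_scope.
Set Implicit Arguments. Unset Strict Implicit. Unset Printing Implicit Defensive.


Section Sig.
Variable R : idomainType.
Variable delta : R -> R.
Variable O : {pred R}.
Variable n : nat.
Variable u : 'M[R]_n.
Variable sigma : R -> R.
Hypothesis HO : is_delta_subring delta O.
Hypothesis Hs : is_dGal_aut delta O u sigma.

Let Ou := Ogen delta O u.

Lemma O1 : 1 \in O. Proof. by case: HO. Qed.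
Lemma OB x y : x \in O -> y \in O -> x - y \in O. Proof. by case: HO => _ H _ _; apply: H. Qed.
Lemma OM x y : x \in O -> y \in O -> x * y \in O. Proof. by case: HO => _ _ H _; apply: H. Qed.
Lemma O0 : 0 \in O. Proof. by rewrite -(subrr 1); apply: OB; apply: O1. Qed.
Lemma ON x : x \in O -> - x \in O. Proof. by move=> h; rewrite -sub0r; apply: OB => //; apply: O0. Qed.
Lemma OD x y : x \in O -> y \in O -> x + y \in O.
Proof. by move=> hx hy; rewrite -[y]opprK; apply: OB => //; apply: ON. Qed.
Lemma Onat k : (k%:R : R) \in O.
Proof. elim: k => [|k IH]; first exact: O0. by rewrite -addn1 natrD; apply: OD => //; apply: O1. Qed.

Lemma Ou_O x : x \in O -> Ou x. Proof. exact: gr_O. Qed.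
Lemma Ou0 : Ou 0. Proof. exact/Ou_O/O0. Qed.
Lemma Ou1 : Ou 1. Proof. exact/Ou_O/O1. Qed.
Lemma OuD x y : Ou x -> Ou y -> Ou (x + y). Proof. exact: gr_add. Qed.
Lemma OuN x : Ou x -> Ou (- x). Proof. exact: gr_opp. Qed.
Lemma OuM x y : Ou x -> Ou y -> Ou (x * y). Proof. exact: gr_mul. Qed.
Lemma OuB x y : Ou x -> Ou y -> Ou (x - y). Proof. by move=> hx hy; apply: OuD => //; apply: OuN. Qed.
Lemma OuX x k : Ou x -> Ou (x ^+ k).
Proof. move=> hx; elim: k => [|k IH]; first exact: Ou1. by rewrite exprS; apply: OuM. Qed.
Lemma Ou_u i j : Ou (u i j). Proof. by apply: gr_S; exists 0%N, i, j. Qed.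
Lemma Ou_du i j : Ou (delta (u i j)). Proof. by apply: gr_S; exists 1%N, i, j; rewrite /= mxE. Qed.

Lemma sig_fix a : a \in O -> sigma a = a. Proof. by case: Hs => _ [_ [_ [_ [_ [H _]]]]]; apply: H. Qed.
Lemma sigD x y : Ou x -> Ou y -> sigma (x + y) = sigma x + sigma y.
Proof. by case: Hs => _ [_ [_ [H _]]]; apply: H. Qed.
Lemma sigM x y : Ou x -> Ou y -> sigma (x * y) = sigma x * sigma y.
Proof. by case: Hs => _ [_ [_ [_ [H _]]]]; apply: H. Qed.
Lemma sig_delta x : Ou x -> delta (sigma x) = sigma (delta x).
Proof. by case: Hs => _ [_ [_ [_ [_ [_ [H _]]]]]]; apply: H. Qed.
Lemma sig0 : sigma 0 = 0. Proof. exact/sig_fix/O0. Qed.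
Lemma sig1 : sigma 1 = 1. Proof. exact/sig_fix/O1. Qed.
Lemma sigN x : Ou x -> sigma (- x) = - sigma x.
Proof.
move=> hx; apply/eqP; rewrite -subr_eq0 opprK addrC -sigD //; last exact: OuN.
by rewrite subrr sig0.
Qed.
Lemma sigX x k : Ou x -> sigma (x ^+ k) = sigma x ^+ k.
Proof.
move=> hx; elim: k => [|k IH]; first by rewrite !expr0 sig1.
by rewrite !exprS sigM ?IH //; apply: OuX.
Qed.

Lemma sig_sum (I : Type) (r : seq I) (P : pred I) (F : I -> R) :
  (forall i, P i -> Ou (F i)) ->
  Ou (\sum_(i <- r | P i) F i) /\ sigma (\sum_(i <- r | P i) F i) = \sum_(i <- r | P i) sigma (F i).
Proof.
move=> hF; apply: (big_rec2 (fun y1 y2 => Ou y1 /\ sigma y1 = y2)).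
  by split; [exact: Ou0 | exact: sig0].
by move=> i y1 y2 Pi [h1 <-]; split; [apply: OuD => //; apply: hF | rewrite sigD //; apply: hF].
Qed.

Lemma sig_prod (I : Type) (r : seq I) (P : pred I) (F : I -> R) :
  (forall i, P i -> Ou (F i)) ->
  Ou (\prod_(i <- r | P i) F i) /\ sigma (\prod_(i <- r | P i) F i) = \prod_(i <- r | P i) sigma (F i).
Proof.
move=> hF; apply: (big_rec2 (fun y1 y2 => Ou y1 /\ sigma y1 = y2)).
  by split; [exact: Ou1 | exact: sig1].
by move=> i y1 y2 Pi [h1 <-]; split; [apply: OuM => //; apply: hF | rewrite sigM //; apply: hF].
Qed.

Lemma sig_det m (A : 'M[R]_m) : (forall i j, Ou (A i j)) ->
  Ou (\det A) /\ sigma (\det A) = \det (map_mx sigma A).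
Proof.
move=> hA; rewrite /determinant.
have hs : forall s : 'S_m, Ou ((-1) ^+ s * \prod_i A i (s i)).
  move=> s; apply: OuM; first by apply: OuX; apply: OuN; apply: Ou1.
  by case: (@sig_prod _ (index_enum _) xpredT (fun i => A i (s i)) (fun i _ => hA _ _)).
case: (@sig_sum _ (index_enum _) xpredT _ (fun s _ => hs s)) => h1 ->.
split=> //; apply: eq_bigr => s _.
rewrite sigM; last by case: (@sig_prod _ (index_enum _) xpredT (fun i => A i (s i)) (fun i _ => hA _ _)).
  rewrite sigX; last by apply: OuN; apply: Ou1.
  rewrite sigN ?sig1; last exact: Ou1.
  case: (@sig_prod _ (index_enum _) xpredT (fun i => A i (s i)) (fun i _ => hA _ _)) => // _ ->.
  by congr (_ * _); apply: eq_bigr => i _; rewrite mxE.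
by apply: OuX; apply: OuN; apply: Ou1.
Qed.

Lemma sig_mulmx a b c (A : 'M[R]_(a, b)) (B : 'M[R]_(b, c)) :
  (forall i j, Ou (A i j)) -> (forall i j, Ou (B i j)) ->
  (forall i j, Ou ((A *m B) i j)) /\ map_mx sigma (A *m B) = map_mx sigma A *m map_mx sigma B.
Proof.
move=> hA hB.
have h : forall i j, forall k, true -> Ou (A i k * B k j) by move=> i j k _; apply: OuM.
split.
  by move=> i j; rewrite mxE; case: (@sig_sum _ (index_enum _) xpredT _ (h i j)).
apply/matrixP => i j; rewrite !mxE.
case: (@sig_sum _ (index_enum _) xpredT _ (h i j)) => _ ->.
by apply: eq_bigr => k _; rewrite sigM // !mxE.
Qed.

End Sig.


Lemma q_entries (R : idomainType) n (q : 'M[R]_n) : is_q q ->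
  forall i j, q i j = 0 \/ q i j = 1 \/ q i j = -1.
Proof.
case=> r [_ [[_ [->| ->]] | [_ ->]]] i j; rewrite mxE;
  repeat case: ifP => _; by auto.
Qed.

Lemma delta_small (R : idomainType) (p : nat) (phi : {rmorphism R -> R}) (delta : R -> R) :
  p%:R != 0 :> R -> odd p -> (forall a : R, p%:R * delta a = phi a - a ^+ p) ->
  forall x : R, (x = 0 \/ x = 1 \/ x = -1) -> delta x = 0.
Proof.
move=> p0 op hd x hx.
have : p%:R * delta x = 0.
  rewrite hd; case: hx => [->|[->|->]]; rewrite ?rmorph0 ?rmorph1 ?rmorphN1 ?expr0n ?expr1n.
  - by case: p p0 {op hd} => [|k]; rewrite ?eqxx // subrr.
  - by rewrite subrr.
  - by rewrite -signr_odd op /= expr1 subrr.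
by move/eqP; rewrite mulf_eq0 (negbTE p0) /= => /eqP.
Qed.

Lemma part2 (R : idomainType) (p : nat) (phi : {rmorphism R -> R}) (delta : R -> R)
    n (O : {pred R}) (q u c : 'M[R]_n) :
  p%:R != 0 :> R -> odd p -> (forall a : R, p%:R * delta a = phi a - a ^+ p) ->
  is_delta_subring delta O -> is_q q -> u^T *m q *m u = q -> \det u = 1 ->
  in_dGal delta O u c -> map_mx delta (c^T *m q *m c) = 0.
Proof.
move=> p0 op hd HO hq Hu du [sigma [Hs ->]].
have qe := q_entries hq.
have uU : u \in unitmx by rewrite unitmxE du unitr1.
have qO : forall i j, q i j \in O.
  move=> i j; case: (qe i j) => [->|[->|->]]; [exact: (O0 HO)| exact: (O1 HO)| exact/(ON HO)/(O1 HO)].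
have Ouq : forall i j, Ogen delta O u (q i j) by move=> i j; apply: Ou_O.
have Ouu : forall i j, Ogen delta O u (u i j) by move=> i j; apply: Ou_u.
have Ouut : forall i j, Ogen delta O u (u^T i j) by move=> i j; rewrite mxE; apply: Ou_u.
have e1 : (invmx u)^T *m q *m invmx u = q.
  rewrite -{1}Hu !mulmxA -trmx_mul mulmxV // trmx1 mul1mx.
  by rewrite -mulmxA mulmxV // mulmx1.
have e2 : (invmx u *m map_mx sigma u)^T *m q *m (invmx u *m map_mx sigma u)
   = (map_mx sigma u)^T *m q *m map_mx sigma u.
  by rewrite trmx_mul -{2}e1 !mulmxA.
rewrite e2.
have [h1 e3] := sig_mulmx HO Hs Ouut Ouq.
have [h2 e4] := sig_mulmx HO Hs h1 Ouu.
have e5 : map_mx sigma q = q by apply/matrixP => i j; rewrite mxE (sig_fix Hs).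
rewrite map_trmx -e5 -e3 -e4 Hu e5.
apply/matrixP => i j; rewrite !mxE; exact: (delta_small p0 op hd (qe i j)).
Qed.


Lemma part1_core (R : idomainType) (p : nat) (phi : {rmorphism R -> R}) (delta : R -> R)
    n (O : {pred R}) (alpha u c Du : 'M[R]_n) (y d : R) :
  p%:R != 0 :> R -> (forall a : R, p%:R * delta a = phi a - a ^+ p) ->
  is_delta_subring delta O -> (forall i j, alpha i j \in O) ->
  u \in unitmx ->
  y ^+ n * (\det (frob p u) / (\det u ^+ p)) = 1 ->
  p%:R * d = y - 1 -> Du = d *: frob p u -> delta_eq p delta alpha u Du ->
  in_dGal delta O u c -> delta (\det c) = 0.
Proof.
move=> p0 hd HO hal uU Hyw Hd eDu Heq [sigma [Hs ->]].
have phiE : forall a, phi a = a ^+ p + p%:R * delta a by move=> a; rewrite hd addrC subrK.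
set F := frob p u.
set M := 1%:M + p%:R *: alpha.
have ephi : map_mx phi u = y *: (M *m F).
  have -> : map_mx phi u = F + p%:R *: map_mx delta u.
    by apply/matrixP => i j; rewrite !mxE phiE.
  rewrite Heq eDu.
  have -> : alpha *m (F + p%:R *: (d *: F)) = (1 + p%:R * d) *: (alpha *m F).
    by rewrite scalerA mulmxDr -scalemxAr scalerDl scale1r.
  have -> : y = 1 + p%:R * d by rewrite Hd addrC subrK.
  rewrite /M mulmxDl mul1mx -scalemxAl !scalerDr !scalerDl !scale1r !scalerA.
  rewrite -/F scalerDr scalerA [p%:R * d * p%:R]mulrC [p%:R * (p%:R * d)]mulrC.
  by rewrite [_ + _ + (p%:R * d) *: F]addrC addrA.
have duU : \det u \is a GRing.unit by rewrite -unitmxE.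
have duUp : \det u ^+ p \is a GRing.unit by rewrite unitrX.
have dphi : phi (\det u) = \det M * \det u ^+ p.
  rewrite -det_map_mx ephi detZ det_mulmx.
  by rewrite /F -{1}[\det (frob p u)](divrK duUp) mulrCA (mulrA (y ^+ n)) Hyw mul1r.
have Oa : forall i j, Ogen delta O u (M i j).
  move=> i j; apply: Ou_O; rewrite !mxE; apply: (OD HO); first exact: (Onat HO).
  by apply: (OM HO); [exact: (Onat HO) | exact: hal].
have [OuDM sD] := sig_det HO Hs Oa.
have eMs : map_mx sigma M = M by apply/matrixP => i j; rewrite mxE (sig_fix Hs) //; have := Oa i j;
  move=> _; rewrite !mxE; apply: (OD HO); [exact: (Onat HO) | apply: (OM HO); [exact: (Onat HO) | exact: hal]].
rewrite eMs in sD.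
have [Oudu sdu] := sig_det HO Hs (Ou_u delta O u).
set s := \det (map_mx sigma u) in sdu.
have Ouphi : forall i j, Ogen delta O u (map_mx phi u i j).
  move=> i j; rewrite mxE phiE; apply: OuD; first by apply: (OuX HO); apply: Ou_u.
  by apply: OuM; [apply: Ou_O; exact: (Onat HO) | exact: Ou_du].
have [_ sphi] := sig_det HO Hs Ouphi.
have comm : map_mx sigma (map_mx phi u) = map_mx phi (map_mx sigma u).
  apply/matrixP => i j; rewrite !mxE !phiE (sig_delta Hs (Ou_u _ _ _ _ _)).
  rewrite (sigD Hs); [| by apply: (OuX HO); apply: Ou_u |
     by apply: OuM; [apply: Ou_O; exact: (Onat HO) | exact: Ou_du]].
  rewrite (sigM Hs); [| apply: Ou_O; exact: (Onat HO) | exact: Ou_du].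
  by rewrite (sigX HO Hs) ?(sig_fix Hs (Onat HO p)) //; apply: Ou_u.
have phis : phi s = \det M * s ^+ p.
  rewrite -det_map_mx -comm -sphi det_map_mx dphi (sigM Hs) //; last by apply: (OuX HO).
  by rewrite sD (sigX HO Hs) // sdu.
have edc : \det (invmx u *m map_mx sigma u) * \det u = s.
  by rewrite det_mulmx det_inv mulrAC mulVr // mul1r.
have pdu0 : phi (\det u) != 0.
  apply/negP => /eqP h; have := rmorph_unit phi duU; by rewrite h unitr0.
set x := \det (invmx u *m map_mx sigma u) in edc *.
have ephix : phi x = x ^+ p.
  apply: (mulIf pdu0); rewrite -rmorphM edc phis -edc exprMn dphi.
  by rewrite mulrCA.
have : p%:R * delta x = 0 by rewrite hd ephix subrr.
by move/eqP; rewrite mulf_eq0 (negbTE p0) /= => /eqP.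
Qed.


Section PD.
Variable R : idomainType.
Variable p : nat.
Hypothesis HR : is_R_ring R p.
Local Notation pd := (@pdvd R p).

Lemma p0 : p%:R != 0 :> R. Proof. by case: HR. Qed.
Lemma pnU : ~~ ((p%:R : R) \is a GRing.unit). Proof. by case: HR. Qed.

Lemma pd0 m : pd m 0. Proof. by exists 0; rewrite mulr0. Qed.
Lemma pdD m x y : pd m x -> pd m y -> pd m (x + y).
Proof. by move=> [a ->] [b ->]; exists (a + b); rewrite mulrDr. Qed.
Lemma pdN m x : pd m x -> pd m (- x).
Proof. by move=> [a ->]; exists (- a); rewrite mulrN. Qed.
Lemma pdB m x y : pd m x -> pd m y -> pd m (x - y).
Proof. by move=> hx hy; apply: pdD => //; apply: pdN. Qed.
Lemma pdMr m x y : pd m x -> pd m (x * y).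
Proof. by move=> [a ->]; exists (a * y); rewrite mulrA. Qed.
Lemma pdMl m x y : pd m x -> pd m (y * x).
Proof. by move=> h; rewrite mulrC; apply: pdMr. Qed.
Lemma pd_le k m x : (k <= m)%N -> pd m x -> pd k x.
Proof.
move=> km [a ->]; exists (p%:R ^+ (m - k) * a).
by rewrite mulrA -exprD subnKC.
Qed.
Lemma pdM a b x y : pd a x -> pd b y -> pd (a + b) (x * y).
Proof.
by move=> [s ->] [t ->]; exists (s * t); rewrite exprD mulrACA.
Qed.
Lemma pdX k x : pd 1 x -> pd k (x ^+ k).
Proof.
move=> hx; elim: k => [|k IH]; first by exists 1; rewrite !expr0 mulr1.
by rewrite exprS -addn1 addnC; apply: pdM.
Qed.
Lemma pd_pow m : pd m (p%:R ^+ m). Proof. by exists 1; rewrite mulr1. Qed.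
Lemma pd_sum m (I : Type) (r : seq I) (P : pred I) (F : I -> R) :
  (forall i, P i -> pd m (F i)) -> pd m (\sum_(i <- r | P i) F i).
Proof.
move=> h; apply: (big_rec (fun x => pd m x)); first exact: pd0.
by move=> i x Pi hx; apply: pdD => //; apply: h.
Qed.

Lemma pd1_nU x : pd 1 x -> ~~ (x \is a GRing.unit).
Proof.
move=> [z ->]; rewrite expr1 unitrM; apply/negP => /andP [h _].
by move: pnU; rewrite h.
Qed.

Lemma krull x : (forall m, pd m x) -> x = 0.
Proof.
move=> h; apply/eqP; apply/negP => /negP x0.
case: HR => _ _ hfac _ _.
have [k [v [vU ex]]] := hfac x x0.
have [z ez] := h k.+1.
have : v = p%:R * z.
  apply: (@mulfI _ (p%:R ^+ k)); first by rewrite expf_neq0 // p0.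
  by rewrite -ex ez exprS mulrA [p%:R ^+ k * _]mulrC.
move=> ev; have : ~~ (v \is a GRing.unit) by apply: pd1_nU; exists z; rewrite expr1.
by rewrite vU.
Qed.

Lemma coprime_unit d : coprime p d -> (d%:R : R) \is a GRing.unit.
Proof.
move=> cpd.
have pgt0 : (0 < p)%N by case: (posnP p) => // e; move: p0; rewrite e eqxx.
have [a _] := Bezoutl d pgt0; rewrite (eqP cpd) => /dvdnP [t ht].
have npd : ~ pd 1 (d%:R : R).
  move=> [z ez]; apply: (negP pnU).
  have e : (1 : R) = p%:R * (t%:R - a%:R * z).
    rewrite mulrBr -natrM mulnC -ht natrD natrM ez expr1.
    by rewrite mulrCA addrK.
  by apply/unitrPr; exists (t%:R - a%:R * z); rewrite -e.
have d0 : (d%:R : R) != 0.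
  by apply/eqP => e; apply: npd; rewrite e; apply: pd0.
case: HR => _ _ hfac _ _.
have [[|k] [v [vU ev]]] := hfac _ d0; first by rewrite ev expr0 mul1r.
by exfalso; apply: npd; rewrite ev exprS -mulrA; exists (p%:R ^+ k * v); rewrite expr1.
Qed.

Lemma ratr_char (x : rat) (z : int) (d : nat) :
  (d%:R : R) \is a GRing.unit -> x * d%:R = z%:~R -> ratr x * d%:R = z%:~R :> R.
Proof.
move=> dU hx.
have e1 : (numq x * d%:Z = z * denq x)%R.
  apply: (@intr_inj rat); rewrite !intrM numqE -hx.
  by rewrite mulrAC.
have hdv : (denq x %| d%:Z)%Z.
  have : (denq x %| numq x * d%:Z)%Z by rewrite e1; apply/dvdzP; exists z.
  rewrite Gauss_dvdzr // coprimezE coprime_sym; exact: coprime_num_den.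
have [e ee] := dvdzP hdv.
have edR : (d%:R : R) = e%:~R * (denq x)%:~R by rewrite -intrM -ee.
have dqU : ((denq x)%:~R : R) \is a GRing.unit by move: dU; rewrite edR unitrM => /andP [].
have ez : z = numq x * e.
  apply: (@mulIf _ (denq x)); first exact: denq_neq0.
  by rewrite -e1 ee mulrA.
rewrite /ratr edR mulrCA divrK // ez intrM mulrC.
by [].
Qed.

Definition pint (x : rat) := exists (z : int) (d : nat), (d%:R : R) \is a GRing.unit /\ x * d%:R = z%:~R.

Lemma pint_int (z : int) : pint z%:~R.
Proof. by exists z, 1%N; rewrite unitr1 mulr1. Qed.
Lemma pintD x y : pint x -> pint y -> pint (x + y).
Proof.
move=> [z1 [d1 [u1 e1]]] [z2 [d2 [u2 e2]]]; exists (z1 * d2%:Z + z2 * d1%:Z), (d1 * d2)%N.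
split; first by rewrite natrM unitrM u1 u2.
rewrite natrM mulrDl mulrA e1 mulrCA e2 intrD !intrM.
by rewrite [d1%:R * _]mulrC.
Qed.
Lemma pintM x y : pint x -> pint y -> pint (x * y).
Proof.
move=> [z1 [d1 [u1 e1]]] [z2 [d2 [u2 e2]]]; exists (z1 * z2), (d1 * d2)%N.
split; first by rewrite natrM unitrM u1 u2.
by rewrite natrM mulrACA e1 e2 intrM.
Qed.
Lemma ratrM_p x y : pint x -> pint y -> ratr (x * y) = ratr x * ratr y :> R.
Proof.
move=> [z1 [d1 [u1 e1]]] [z2 [d2 [u2 e2]]].
have U : ((d1 * d2)%N%:R : R) \is a GRing.unit by rewrite natrM unitrM u1 u2.
have h : x * y * (d1 * d2)%N%:R = (z1 * z2)%:~R by rewrite natrM mulrACA e1 e2 intrM.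
apply: (mulIr U); rewrite /= (ratr_char U h) natrM mulrACA (ratr_char u1 e1) (ratr_char u2 e2).
by rewrite intrM.
Qed.
Lemma ratrD_p x y : pint x -> pint y -> ratr (x + y) = ratr x + ratr y :> R.
Proof.
move=> [z1 [d1 [u1 e1]]] [z2 [d2 [u2 e2]]].
have U : ((d1 * d2)%N%:R : R) \is a GRing.unit by rewrite natrM unitrM u1 u2.
have h : (x + y) * (d1 * d2)%N%:R = (z1 * d2%:Z + z2 * d1%:Z)%:~R.
  rewrite natrM mulrDl mulrA e1 mulrCA e2 intrD !intrM.
  by rewrite [d1%:R * _]mulrC.
apply: (mulIr U); rewrite /= (ratr_char U h) natrM mulrDl mulrA (ratr_char u1 e1).
rewrite mulrCA (ratr_char u2 e2) intrD !intrM.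
by rewrite [d1%:R * _]mulrC.
Qed.
Lemma ratr_int_p (z : int) : ratr z%:~R = z%:~R :> R. Proof. exact: ratr_int. Qed.
End PD.


Lemma rising x k : (\prod_(i < k) (x.+1 + i) = (x + k) ^_ k)%N.
Proof.
elim: k => [|k IH]; first by rewrite big_ord0 ffactn0.
by rewrite big_ord_recr /= IH addnS ffactSS addSn mulnC.
Qed.

Lemma pv_dvd (p n k : nat) : prime p -> coprime n p ->
  (p ^ logn p k`! %| \prod_(i < k) (1 + i * n))%N.
Proof.
move=> pp cnp; set d := (p ^ logn p k`!)%N.
have n0 : (0 < n)%N.
  case: (posnP n) cnp => // ->; rewrite /coprime gcd0n => /eqP p1.
  by move: pp; rewrite p1.
have cnd : coprime n d by apply: coprimeXr.
case: (egcdnP d n0) => km kn e _; move: e; rewrite (eqP cnd) => e.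
have km0 : km != 0%N by apply/eqP => k0; move: e; rewrite k0 mul0n addn1.
have e2 : (\prod_(i < k) (1 + i * n) = \prod_(i < k) (n * (km + i)) %[mod d])%N.
  apply: (big_ind2 (fun a b => a = b %[mod d])%N) => //.
    by move=> a1 b1 a2 b2 e1 e3; rewrite -modnMm e1 e3 modnMm.
  by move=> i _; rewrite mulnDr [(n * km)%N]mulnC e -addnA modnMDl [(i * n)%N]mulnC.
rewrite /dvdn e2; change (d %| \prod_(i < k) (n * (km + i)))%N.
rewrite big_split /=; apply: dvdn_mull.
case: km km0 {e e2} => // x _.
rewrite rising -bin_ffact; apply: dvdn_mull; exact: pfactor_dvdnn.
Qed.

Definition conv (T : pzRingType) (s t : nat -> T) (k : nat) : T :=
  \sum_(i < k.+1) s i * t (k - i)%N.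
Definition powc (T : pzRingType) (s : nat -> T) (m : nat) : nat -> T :=
  iter m (fun f => conv f s) (fun k => (k == 0%N)%:R).

Lemma fact_neq0 k : (k`!)%:R != 0 :> rat.
Proof. by rewrite pnatr_eq0 -lt0n fact_gt0. Qed.
Lemma natS_neq0 k : (k.+1)%:R != 0 :> rat.
Proof. by rewrite pnatr_eq0. Qed.

Lemma binq0 c : binq c 0 = 1.
Proof. by rewrite /binq big_ord0 fact0 divr1. Qed.
Lemma binq_rec c k : binq c k.+1 * k.+1%:R = binq c k * (c - k%:R).
Proof.
rewrite /binq big_ord_recr /= factS natrM.
have h1 := fact_neq0 k; have h2 := natS_neq0 k.
field. by rewrite h1 [1 + _]addrC natr1.
Qed.
Lemma binq0S k : binq 0 k.+1 = 0.
Proof. by rewrite /binq big_ord_recl /= subrr !mul0r. Qed.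

Lemma vander a b k : conv (binq a) (binq b) k = binq (a + b) k.
Proof.
elim: k => [|k IH]; first by rewrite /conv big_ord1 /= !binq0 mulr1.
apply: (mulIf (natS_neq0 k)); rewrite binq_rec -IH /conv mulr_suml.
have e : forall i : 'I_k.+2, binq a i * binq b (k.+1 - i) * k.+1%:R =
   binq a i * i%:R * binq b (k.+1 - i) + binq a i * (binq b (k.+1 - i) * (k.+1 - i)%:R).
  move=> i; have hi : (i <= k.+1)%N by rewrite -ltnS.
  have -> : (k.+1%:R : rat) = i%:R + (k.+1 - i)%:R by rewrite -natrD subnKC.
  ring.
rewrite (eq_bigr _ (fun i _ => e i)) big_split /=.
rewrite [X in X + _]big_ord_recl [X in _ + X]big_ord_recr /= !subnn !mulr0n mulr0 mul0r add0r.
rewrite !mulr0 addr0.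
rewrite mulr_suml -big_split /=; apply: eq_bigr => i _.
rewrite /bump /= add1n subSS binq_rec.
have hi : (i <= k)%N by rewrite -ltnS.
rewrite subSn // binq_rec natrB //; ring.
Qed.

Lemma powcS (T : pzRingType) (s : nat -> T) m : powc s m.+1 = conv (powc s m) s.
Proof. by []. Qed.

Lemma powc_binq a m k : powc (binq a) m k = binq (m%:R * a) k.
Proof.
elim: m k => [|m IH] k.
  by rewrite mul0r; case: k => [|k] /=; rewrite ?binq0 ?binq0S.
rewrite powcS /conv (eq_bigr (fun i : 'I_k.+1 => binq (m%:R * a) i * binq a (k - i))); last first.
  by move=> i _; rewrite IH.
rewrite -/(conv (binq (m%:R * a)) (binq a) k) vander.
by rewrite -[m.+1]addn1 natrD mulrDl mul1r.
Qed.

Lemma binq1 k : binq 1 k = (k <= 1)%N%:R.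
Proof.
case: k => [|[|k]]; first by rewrite binq0.
  by rewrite /binq big_ord1 /= subr0 divr1.
rewrite /binq big_ord_recl big_ord_recl /=.
by rewrite /bump /= subrr mul0r mulr0 mul0r.
Qed.

Lemma key_rat (n : nat) : n != 0%N -> forall k,
  conv (powc (binq (- (n%:R^-1))) n) (binq 1) k = (k == 0%N)%:R.
Proof.
move=> n0 k.
rewrite /conv (eq_bigr (fun i : 'I_k.+1 => binq (n%:R * (- (n%:R^-1))) i * binq 1 (k - i))); last first.
  by move=> i _; rewrite powc_binq.
rewrite -/(conv _ _ k) vander mulrN mulfV ?pnatr_eq0 // addNr.
by case: k => [|k]; rewrite ?binq0 ?binq0S.
Qed.


Lemma prod_neg (n k : nat) : n != 0%N ->
  \prod_(i < k) (- (n%:R^-1) - i%:R) * n%:R ^+ k = (-1) ^+ k * (\prod_(i < k) (1 + i * n))%N%:R :> rat.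
Proof.
move=> n0; have nR : (n%:R : rat) != 0 by rewrite pnatr_eq0.
elim: k => [|k IH]; first by rewrite !big_ord0 !expr0 mulr1.
rewrite !big_ord_recr /= !exprSr natrM mulrACA IH.
have f : (- (n%:R^-1) - k%:R) * n%:R = - (1 + k * n)%N%:R :> rat.
  rewrite natrD natrM; field; exact: nR.
by rewrite f; ring.
Qed.

Lemma pint_binq (R : idomainType) (p n k : nat) : is_R_ring R p -> prime p -> coprime n p ->
  pint R (binq (- (n%:R^-1)) k).
Proof.
move=> HR pp cnp.
have n0 : n != 0%N.
  apply/eqP => e; move: cnp; rewrite e /coprime gcd0n => /eqP p1; by move: pp; rewrite p1.
have nR : (n%:R : rat) != 0 by rewrite pnatr_eq0.
have pR : (p%:R : rat) != 0 by rewrite pnatr_eq0 -lt0n prime_gt0.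
set v := logn p k`!.
have [z0 eP] : exists z0, (\prod_(i < k) (1 + i * n) = z0 * p ^ v)%N.
  by exists ((\prod_(i < k) (1 + i * n)) %/ p ^ v)%N; rewrite divnK //; apply: pv_dvd.
have [m cpm ek] := pfactor_coprime pp (fact_gt0 k).
have m0 : (m%:R : rat) != 0.
  by rewrite pnatr_eq0; apply/eqP => e; move: (fact_gt0 k); rewrite ek e mul0n.
exists ((-1) ^+ k * z0%:Z), (n ^ k * m)%N; split.
  apply: (coprime_unit HR); rewrite coprimeMr cpm andbT coprimeXr //.
  by rewrite coprime_sym.
have -> : binq (- (n%:R^-1)) k * (n ^ k * m)%N%:R =
   (\prod_(i < k) (- (n%:R^-1) - i%:R) * n%:R ^+ k) * m%:R / (m%:R * p%:R ^+ v).
  rewrite /binq ek -/v !natrM !natrX; field.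
  by rewrite m0 expf_neq0.
rewrite prod_neg // eP natrM natrX intrM rmorphXn rmorphN1 /=.
field; by rewrite m0 expf_neq0.
Qed.


Section Ser.
Variable R : idomainType.
Variable p : nat.
Hypothesis HR : is_R_ring R p.
Local Notation pd := (@pdvd R p).
Local Notation pint := (pint R).

Lemma ratr0R : ratr 0 = 0 :> R. Proof. by rewrite (ratr_nat R 0). Qed.

Lemma conv_map (s t : nat -> rat) k : (forall i, pint (s i)) -> (forall i, pint (t i)) ->
  pint (conv s t k) /\ ratr (conv s t k) = conv (fun i => ratr (s i) : R) (fun i => ratr (t i)) k.
Proof.
move=> hs ht; rewrite /conv.
apply: (big_rec2 (fun x (y : R) => pint x /\ ratr x = y)).
  by split; [exact: (pint_int R 0) | exact: ratr0R].
move=> i x y _ [hx <-]; have hm : pint (s i * t (k - i)%N) by apply: pintM.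
split; first exact: pintD.
by rewrite ratrD_p // ratrM_p.
Qed.

Lemma powc_map (s : nat -> rat) m : (forall i, pint (s i)) -> forall k,
  pint (powc s m k) /\ ratr (powc s m k) = powc (fun i => ratr (s i) : R) m k.
Proof.
move=> hs; elim: m => [|m IH] k.
  by split; [exact: (pint_int R (k == 0%N)%N) | exact: ratr_nat].
rewrite !powcS; have [h1 h2] := conv_map k (fun i => proj1 (IH i)) hs.
split=> //; rewrite h2 /conv; apply: eq_bigr => i _; by rewrite (proj2 (IH i)).
Qed.

Variable n : nat.
Hypothesis pp : prime p.
Hypothesis pn : ~~ (p %| n)%N.

Lemma cnp : coprime n p. Proof. by rewrite coprime_sym prime_coprime. Qed.
Lemma n0 : n != 0%N. Proof. by apply/eqP => e; move: pn; rewrite e dvdn0. Qed.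

Definition bet k : R := ratr (binq (- (n%:R^-1)) k).
Definition gam k : R := ratr (binq 1 k).

Lemma key_R k : conv (powc bet n) gam k = (k == 0%N)%:R.
Proof.
have hb : forall i, pint (binq (- (n%:R^-1)) i) by move=> i; exact: (@pint_binq R p n i HR pp cnp).
have hg : forall i, pint (binq 1 i) by move=> i; rewrite binq1; exact: (pint_int R (i <= 1)%N).
have [h1 h2] := conv_map k (fun i => proj1 (powc_map n hb i)) hg.
have e : conv (powc bet n) gam k = ratr (conv (powc (binq (- (n%:R^-1))) n) (binq 1) k).
  rewrite h2 /conv; apply: eq_bigr => i _; by rewrite (proj2 (powc_map n hb i)).
by rewrite e key_rat ?n0 // ratr_nat.
Qed.

Variable N : nat.
Definition Pb : {poly R} := \poly_(i < N) bet i.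

Lemma coefPX m k : (k < N)%N -> (Pb ^+ m)`_k = powc bet m k.
Proof.
elim: m k => [|m IH] k kN; first by rewrite expr0 coef1.
rewrite exprSr coefM powcS /conv; apply: eq_bigr => i _.
have hi : (i <= k)%N by rewrite -ltnS.
rewrite IH; last exact: leq_ltn_trans kN.
rewrite coef_poly ifT //; exact: leq_ltn_trans (leq_subr _ _) kN.
Qed.

Lemma coefQ k : (k < N)%N -> (Pb ^+ n * (1 + 'X) - 1)`_k = 0.
Proof.
move=> kN; rewrite coefB coefM coef1 -(key_R k) /conv ; apply/eqP; rewrite subr_eq0; apply/eqP.
apply: eq_bigr => i _; rewrite coefPX; last first.
  by apply: leq_ltn_trans kN; rewrite -ltnS.
congr (_ * _); rewrite coefD coef1 coefX /gam binq1 ratr_nat.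
by case: (k - i)%N => [|[|j]] /=; rewrite ?addr0 ?add0r.
Qed.

Lemma Q_horner (X : R) : pd 1 X -> pd N ((Pb ^+ n * (1 + 'X) - 1).[X]).
Proof.
move=> hX; rewrite horner_coef; apply: pd_sum => i _.
case: (ltnP i N) => iN; first by rewrite coefQ // mul0r; apply: pd0.
by apply: pdMl; apply: (pd_le iN); apply: pdX.
Qed.

Lemma PbE X : Pb.[X] = \sum_(k < N) bet k * X ^+ k.
Proof. by rewrite horner_poly. Qed.

End Ser.


Lemma series_main (R : idomainType) (p n : nat) (w y : R) :
  is_R_ring R p -> prime p -> ~~ (p %| n)%N ->
  pdvd p 1 (w - 1) -> bin_pow_rel p (- (n%:R)^-1) w y -> y ^+ n * w = 1.
Proof.
move=> HR pp pn hX hb; apply/eqP; rewrite -subr_eq0; apply/eqP; apply: (krull HR) => m.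
have [N0 hN] := hb m; set N := maxn N0 m.
have hyS := hN N (leq_maxl _ _).
set S := \sum_(k < N) _ in hyS.
have eS : S = (Pb R n N).[w - 1] by rewrite PbE.
have e : y ^+ n * w - 1 = (y ^+ n - S ^+ n) * w + (S ^+ n * w - 1).
  by rewrite mulrBl addrA subrK.
rewrite e; apply: pdD.
  by rewrite subrXX; apply: pdMr; apply: pdMr.
have eQ : ((Pb R n N) ^+ n * (1 + 'X) - 1).[w - 1] = S ^+ n * w - 1.
  rewrite hornerD hornerN hornerM horner_exp hornerD hornerX -eS ?hornerC ?horner1.
  by rewrite [1 + _]addrC subrK.
rewrite -eQ; apply: (pd_le (leq_maxr N0 m)); exact: Q_horner.
Qed.

Lemma det_cong1 (R : idomainType) (p : nat) m (A B : 'M[R]_m) :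
  (forall i j, pdvd p 1 (A i j - B i j)) -> pdvd p 1 (\det A - \det B).
Proof.
move=> hAB.
have K2 : forall x1 y1 x2 y2 : R, pdvd p 1 (x1 - y1) -> pdvd p 1 (x2 - y2) ->
    pdvd p 1 (x1 * x2 - y1 * y2).
  move=> x1 y1 x2 y2 h1 h2.
  have -> : x1 * x2 - y1 * y2 = x1 * (x2 - y2) + (x1 - y1) * y2.
    by rewrite mulrBr mulrBl addrA subrK.
  by apply: pdD; [apply: pdMl | apply: pdMr].
rewrite /determinant.
apply: (big_rec2 (fun x y : R => pdvd p 1 (x - y))); first by rewrite subrr; apply: pd0.
move=> s x y _ hxy.
have -> : (-1) ^+ s * \prod_i A i (s i) + x - ((-1) ^+ s * \prod_i B i (s i) + y)
   = ((-1) ^+ s * \prod_i A i (s i) - (-1) ^+ s * \prod_i B i (s i)) + (x - y).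
  by rewrite opprD addrACA.
apply: pdD => //; apply: (K2); first by rewrite subrr; apply: pd0.
apply: (big_rec2 (fun x y : R => pdvd p 1 (x - y))); first by rewrite subrr; apply: pd0.
by move=> i x1 y1 _ h; apply: (K2).
Qed.

Lemma w_cong (R : idomainType) (p : nat) (phi : {rmorphism R -> R}) n (u : 'M[R]_n) :
  (forall a : R, pdvd p 1 (phi a - a ^+ p)) -> u \in unitmx ->
  pdvd p 1 (\det (frob p u) / (\det u ^+ p) - 1).
Proof.
move=> hphi uU.
have duU : \det u ^+ p \is a GRing.unit by rewrite unitrX // -unitmxE.
have -> : \det (frob p u) / \det u ^+ p - 1 = (\det (frob p u) - \det u ^+ p) / \det u ^+ p.
  by rewrite mulrBl divrr.
apply: pdMr.
have -> : \det (frob p u) - \det u ^+ p =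
  (\det (frob p u) - \det (map_mx phi u)) + (phi (\det u) - \det u ^+ p).
  by rewrite det_map_mx addrA subrK.
apply: pdD => //; apply: det_cong1 => i j; rewrite !mxE.
by rewrite -opprB; apply: pdN.
Qed.

Theorem theorem1p5 (p : nat) (R : idomainType) (phi : {rmorphism R -> R})
    (delta : R -> R) (n : nat) (O : {pred R}) (alpha : 'M[R]_n) :
  prime p -> odd p -> is_R_ring R p ->
  (forall a : R, pdvd p 1 (phi a - a ^+ p)) ->
  (forall a : R, p%:R * delta a = phi a - a ^+ p) ->
  is_delta_subring delta O -> (forall i j, alpha i j \in O) ->
  (* 1) type SL_n *)
  (~~ (p %| n)%N ->
     forall u : 'M[R]_n, u \in unitmx ->
     (exists Du, DeltaSL_rel p u Du /\ delta_eq p delta alpha u Du) ->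
     forall c, in_dGal delta O u c -> delta (\det c) = 0)
  /\
  (* 2) type SO(q) *)
  (forall q : 'M[R]_n, is_q q ->
     forall u : 'M[R]_n, u^T *m q *m u = q -> \det u = 1 ->
     (exists Du, DeltaSO_rel p q u Du /\ delta_eq p delta alpha u Du) ->
     forall c, in_dGal delta O u c -> map_mx delta (c^T *m q *m c) = 0).
Proof.
move=> pp op HR hphi hd HO hal; split.
  move=> pn u uU [Du [[y [d [hb Hd eDu]]] Heq]] c hc.
  have hX := w_cong hphi uU.
  have Hyw := series_main HR pp pn hX hb.
  exact: (part1_core (p0 HR) hd HO hal uU Hyw Hd eDu Heq hc).
move=> q hq u Hu du _ c hc.
exact: (part2 (p0 HR) op hd HO hq Hu du hc).
Qed.
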